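(* Let $\varepsilon\in(0,1)$ and let $G_0$ be the symmetric game with payoff matrix $$U_0= \begin{pmatrix} 0 & -1 & \varepsilon & 0 \\ \varepsilon & 0 & -1 & 0 \\ -1 & \varepsilon & 0 & 0 \\ \frac{-1+\varepsilon}{3} & \frac{-1+\varepsilon}{3} & \frac{-1+\varepsilon}{3} & 0 \end{pmatrix}.$$ Let $n=(1/3,1/3,1/3,0)$, $E_0=\{\lambda n+(1-\lambda)e_4:\lambda\in[0,1]\}$, and $$V_0(x)=\frac12\sum_{i=1}^4\big[\max(0,(U_0x)_i-x\cdot U_0x)\big]^2 .$$ Then there exists an open neighborhood $N_{eq}$ of $E_0$ in $S_4$ such that, for every solution $x(\cdot)$ of the Brown-von Neumann-Nash dynamics in $G_0$, the function $v_0(t)=V_0(x(t))$ satisfies $\dot v_0(t)>0$ whenever $x(t)\in N_{eq}\setminus E_0$.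
   Context: The Brown-von Neumann-Nash (BNN) dynamics for payoff matrix $U$ on $S_4$ is $\dot x_i=k_i(x)-x_i\sum_j k_j(x)$ with $k_i(x)=\max(0,(Ux)_i-x\cdot Ux)$. $e_4$ is the fourth vertex of $S_4$. *)

(* Defs.v *)
From HB Require Import structures.
From mathcomp Require Import all_boot all_order all_algebra.
From mathcomp Require Import all_classical all_reals all_analysis.
Set Implicit Arguments. Unset Strict Implicit. Unset Printing Implicit Defensive.
Import Order.TTheory GRing.Theory Num.Theory.
Import numFieldNormedType.Exports.
Local Open Scope classical_set_scope.
Local Open Scope ring_scope.

Section BNN.
Variable R : realType.

Definition payoff (U : 'M[R]_4) (x : 'rV[R]_4) (i : 'I_4) : R :=
  \sum_(j < 4) U i j * x 0 j.

Definition avg_payoff (U : 'M[R]_4) (x : 'rV[R]_4) : R :=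
  \sum_(i < 4) x 0 i * payoff U x i.

Definition excess (U : 'M[R]_4) (x : 'rV[R]_4) (i : 'I_4) : R :=
  Num.max 0 (payoff U x i - avg_payoff U x).

Definition bnn (U : 'M[R]_4) (x : 'rV[R]_4) : 'rV[R]_4 :=
  \row_i (excess U x i - x 0 i * \sum_(j < 4) excess U x j).

Definition simplex4 : set 'rV[R]_4 :=
  [set x | (forall i, 0 <= x 0 i) /\ \sum_(i < 4) x 0 i = 1].

Definition e4 : 'rV[R]_4 := \row_(i < 4) (if i == ord_max then 1 else 0).

Definition nvec : 'rV[R]_4 := \row_(i < 4) (if i == ord_max then 0 else 3^-1).

Definition E0 : set 'rV[R]_4 :=
  [set lam *: nvec + (1 - lam) *: e4 | lam in `[0, 1]%classic].

(* the payoff matrix U_0 (rows/cols indexed 0..3 for 1..4) *)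
Definition U0 (eps : R) : 'M[R]_4 :=
  \matrix_(i < 4, j < 4)
    match nat_of_ord i, nat_of_ord j with
    | 0, 0 => 0 | 0, 1 => -1 | 0, 2 => eps | 0, _ => 0
    | 1, 0 => eps | 1, 1 => 0 | 1, 2 => -1 | 1, _ => 0
    | 2, 0 => -1 | 2, 1 => eps | 2, 2 => 0 | 2, _ => 0
    | _, 3 => 0
    | _, _ => (-1 + eps) / 3
    end.

Definition V0 (eps : R) (x : 'rV[R]_4) : R :=
  2^-1 * \sum_(i < 4) (excess (U0 eps) x i) ^+ 2.

End BNN.

(* Main.v *)
Require Import Defs.
From HB Require Import structures.
From mathcomp Require Import all_boot all_order all_algebra.
From mathcomp Require Import all_classical all_reals all_analysis.
From mathcomp Require Import ring lra.
Import Order.TTheory GRing.Theory Num.Theory.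
Import numFieldNormedType.Exports.
Local Open Scope classical_set_scope.
Local Open Scope ring_scope.

Section Key.
Variable R : realFieldType.

Lemma max0_eq (g : R) : Num.max 0 g = if 0 < g then g else 0.
Proof. by rewrite /Num.max. Qed.

Lemma max0_ge (g : R) : 0 <= Num.max 0 g.
Proof. rewrite max0_eq; case: ltrP => h; lra. Qed.

Lemma max0_le (g : R) : g <= 0 -> Num.max 0 g = 0.
Proof. rewrite max0_eq; case: ltrP => h; lra. Qed.

Lemma max0_mul (g : R) : Num.max 0 g * g = Num.max 0 g ^+ 2.
Proof. rewrite max0_eq; case: ltrP => h; ring. Qed.

Lemma max0_ub (g u : R) : g <= u -> 0 <= u -> Num.max 0 g <= u.
Proof. rewrite max0_eq; case: ltrP => h; lra. Qed.

Lemma max0_pos (g : R) : Num.max 0 g = 0 -> g <= 0.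
Proof. rewrite max0_eq; case: ltrP => h; lra. Qed.

Lemma ey_bound (e y r : R) : 0 < e -> e < 1 -> 0 < r -> -2 * r < y -> y < 2 * r ->
  -2 * r < e * y /\ e * y < 2 * r.
Proof. move=> *; split; nra. Qed.

Lemma sq_lb (u v : R) : u ^+ 2 / 2 - v ^+ 2 <= (u - v) ^+ 2.
Proof. have : 0 <= (u - 2 * v) ^+ 2 by exact: sqr_ge0. nra. Qed.

Lemma fin (e r S K Q Y : R) : 400 * r = 1 - e -> 0 < r -> r <= 1 / 400 -> 0 < S ->
  0 <= K -> K <= 12 * r -> S / 6 - 2 * S * Y <= Q -> 0 <= Y -> Y <= 12 * r ^+ 2 ->
  0 < (1 - e) / 2 * Q - K * S.
Proof.
move=> hr r0 r1 S0 K0 K1 hQ Y0 Y1.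
have h1 : 200 * r * (S / 6 - 2 * S * Y) <= (1 - e) / 2 * Q.
  rewrite -hr; have : 0 <= 200 * r by lra. nra.
have h2 : S * Y <= S * (12 * r ^+ 2) by apply: ler_wpM2l; lra.
have h3 : K * S <= 12 * r * S by apply: ler_wpM2r; lra.
have h4 : r ^+ 2 <= 1 / 400 * r by rewrite expr2; apply: ler_wpM2r; lra.
have h5 : 0 < r * S by apply: mulr_gt0.
have h6 : r * (S * (r ^+ 2)) <= r * (S * (1/400 * r)) by apply: ler_wpM2l; [lra|apply: ler_wpM2l; lra].
nra.
Qed.

Lemma sq4 (d dl : R) : 0 <= dl -> - 2 * dl <= d -> d <= dl -> d ^+ 2 <= 4 * dl ^+ 2.
Proof.
move=> h0 h1 h2.
have : 0 <= (d + 2 * dl) * (2 * dl - d) by apply: mulr_ge0; lra.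
have -> : (d + 2 * dl) * (2 * dl - d) = 4 * dl ^+ 2 - d ^+ 2 by rewrite !expr2; ring.
lra.
Qed.

Lemma sq_bd {y r : R} : -2 * r < y -> y < 2 * r -> y ^+ 2 <= 4 * r ^+ 2.
Proof.
move=> h1 h2.
have : 0 <= (2 * r - y) * (2 * r + y) by apply: mulr_ge0; lra.
have -> : (2 * r - y) * (2 * r + y) = 4 * r ^+ 2 - y ^+ 2 by rewrite !expr2; ring.
lra.
Qed.

Lemma K2lem (k0 k1 k2 : R) : k0 = 0 \/ k1 = 0 \/ k2 = 0 ->
  (k0 + k1 + k2) ^+ 2 <= 2 * (k0 ^+ 2 + k1 ^+ 2 + k2 ^+ 2).
Proof.
have h01 := sqr_ge0 (k0 - k1); have h02 := sqr_ge0 (k0 - k2); have h12 := sqr_ge0 (k1 - k2).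
case=> [->|[->|->]].
- have -> : 2 * (0 ^+ 2 + k1 ^+ 2 + k2 ^+ 2) = (0 + k1 + k2) ^+ 2 + (k1 - k2) ^+ 2 by ring.
  lra.
- have -> : 2 * (k0 ^+ 2 + 0 ^+ 2 + k2 ^+ 2) = (k0 + 0 + k2) ^+ 2 + (k0 - k2) ^+ 2 by ring.
  lra.
- have -> : 2 * (k0 ^+ 2 + k1 ^+ 2 + 0 ^+ 2) = (k0 + k1 + 0) ^+ 2 + (k0 - k1) ^+ 2 by ring.
  lra.
Qed.

Lemma no_eq (e y0 y1 r : R) : 0 < e -> e < 1 -> 0 < r -> r <= 1 / 400 ->
  y0 ^+ 2 <= 4 * r ^+ 2 -> y1 ^+ 2 <= 4 * r ^+ 2 -> (- y0 - y1) ^+ 2 <= 4 * r ^+ 2 ->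
  - y1 + e * (- y0 - y1) <= (1 - e) / 2 * (y0 ^+ 2 + y1 ^+ 2 + (- y0 - y1) ^+ 2) ->
  e * y0 - (- y0 - y1) <= (1 - e) / 2 * (y0 ^+ 2 + y1 ^+ 2 + (- y0 - y1) ^+ 2) ->
  - y0 + e * y1 <= (1 - e) / 2 * (y0 ^+ 2 + y1 ^+ 2 + (- y0 - y1) ^+ 2) ->
  y0 = 0 /\ y1 = 0.
Proof.
move=> e0 e1 r0 r1 b0 b1 b2.
have s0 := sqr_ge0 y0; have s1 := sqr_ge0 y1; have s2 := sqr_ge0 (- y0 - y1).
set Y := y0 ^+ 2 + y1 ^+ 2 + (- y0 - y1) ^+ 2.
set dl := (1 - e) / 2 * Y.
move=> d0l d1l d2l.
have Y0 : 0 <= Y by rewrite /Y; lra.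
have Y1 : Y <= 12 * r ^+ 2 by rewrite /Y; lra.
have dl0 : 0 <= dl by rewrite /dl; apply: mulr_ge0; lra.
have sd : (- y1 + e * (- y0 - y1)) + (e * y0 - (- y0 - y1)) + (- y0 + e * y1) = 0 by ring.
have q0 : (- y1 + e * (- y0 - y1)) ^+ 2 <= 4 * dl ^+ 2 by apply: sq4 => //; lra.
have q1 : (e * y0 - (- y0 - y1)) ^+ 2 <= 4 * dl ^+ 2 by apply: sq4 => //; lra.
have q2 : (- y0 + e * y1) ^+ 2 <= 4 * dl ^+ 2 by apply: sq4 => //; lra.
have hD2 : (- y1 + e * (- y0 - y1)) ^+ 2 + (e * y0 - (- y0 - y1)) ^+ 2 + (- y0 + e * y1) ^+ 2 = (1 + e + e ^+ 2) * Y.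
  by rewrite /Y; ring.
have eY : 0 <= e * Y by apply: mulr_ge0; lra.
have e2Y : 0 <= e ^+ 2 * Y by apply: mulr_ge0; [exact: sqr_ge0|lra].
have dlY : dl <= Y / 2 by rewrite /dl; lra.
have dl2 : dl ^+ 2 <= Y ^+ 2 / 4.
  have : dl * dl <= (Y / 2) * (Y / 2) by apply: ler_pM; lra.
  rewrite !expr2; lra.
have YY : Y <= 3 * Y ^+ 2 by lra.
have r2 : r ^+ 2 <= 1 / 400 * r by rewrite expr2; apply: ler_wpM2r; lra.
have Yz : Y = 0.
  have h : Y * (1 - 3 * Y) <= 0.
    have -> : Y * (1 - 3 * Y) = Y - 3 * Y ^+ 2 by rewrite expr2; ring.
    lra.
  have h2 : 0 < 1 - 3 * Y by lra.
  have : Y <= 0 by rewrite -(pmulr_rle0 _ h2) mulrC.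
  lra.
split.
  by apply/eqP; rewrite -sqrf_eq0; apply/eqP; move: Yz; rewrite /Y; lra.
by apply/eqP; rewrite -sqrf_eq0; apply/eqP; move: Yz; rewrite /Y; lra.
Qed.

Lemma key (e a b c d m k0 k1 k2 k3 g0 g1 g2 g3 : R) :
  0 < e -> e < 1 -> a + b + c + d = 1 ->
  `|a - m| < (1 - e) / 400 -> `|b - m| < (1 - e) / 400 -> `|c - m| < (1 - e) / 400 ->
  ~ (a = b /\ b = c) ->
  g0 = (- b + e * c) - (a * (- b + e * c) + b * (e * a - c) + c * (- a + e * b) + d * ((-1 + e) / 3 * (a + b + c))) ->
  g1 = (e * a - c) - (a * (- b + e * c) + b * (e * a - c) + c * (- a + e * b) + d * ((-1 + e) / 3 * (a + b + c))) ->
  g2 = (- a + e * b) - (a * (- b + e * c) + b * (e * a - c) + c * (- a + e * b) + d * ((-1 + e) / 3 * (a + b + c))) ->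
  g3 = ((-1 + e) / 3 * (a + b + c)) - (a * (- b + e * c) + b * (e * a - c) + c * (- a + e * b) + d * ((-1 + e) / 3 * (a + b + c))) ->
  k0 = Num.max 0 g0 -> k1 = Num.max 0 g1 -> k2 = Num.max 0 g2 -> k3 = Num.max 0 g3 ->
  0 < (1 - e) / 2 * ((k0 - a * (k0 + k1 + k2 + k3)) ^+ 2 + (k1 - b * (k0 + k1 + k2 + k3)) ^+ 2
        + (k2 - c * (k0 + k1 + k2 + k3)) ^+ 2
        - ((k0 - a * (k0 + k1 + k2 + k3)) + (k1 - b * (k0 + k1 + k2 + k3))
           + (k2 - c * (k0 + k1 + k2 + k3))) ^+ 2 / 3)
      - (k0 + k1 + k2 + k3) * (k0 * g0 + k1 * g1 + k2 * g2 + k3 * g3).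
Proof.
move=> e0 e1 hs ha hb hc hne hg0 hg1 hg2 hg3 hk0 hk1 hk2 hk3.
set r := (1 - e) / 400.
have r0 : 0 < r by rewrite /r; lra.
have hr : 400 * r = 1 - e by rewrite /r; field.
move: ha hb hc; rewrite !ltr_norml => /andP[ha1 ha2] /andP[hb1 hb2] /andP[hc1 hc2].
have hd : d = 1 - a - b - c by lra.
set y0 := a - (a + b + c) / 3.
set y1 := b - (a + b + c) / 3.
set y2 := c - (a + b + c) / 3.
set dl := (1 - e) / 2 * (y0 ^+ 2 + y1 ^+ 2 + y2 ^+ 2).
have hdl : 0 <= dl by rewrite /dl; apply: mulr_ge0; [lra| nra].
have eg0 : g0 = (- y1 + e * y2) - dl.
  by rewrite hg0 hd /dl /y0 /y1 /y2; field.
have eg1 : g1 = (e * y0 - y2) - dl.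
  by rewrite hg1 hd /dl /y0 /y1 /y2; field.
have eg2 : g2 = (- y0 + e * y1) - dl.
  by rewrite hg2 hd /dl /y0 /y1 /y2; field.
have eg3 : g3 = - dl.
  by rewrite hg3 hd /dl /y0 /y1 /y2; field.
clear hg0 hg1 hg2 hg3.
have hy0 : -2 * r < y0 < 2 * r by rewrite /y0; apply/andP; split; lra.
have hy1 : -2 * r < y1 < 2 * r by rewrite /y1; apply/andP; split; lra.
have hy2 : -2 * r < y2 < 2 * r by rewrite /y2; apply/andP; split; lra.
move: hy0 hy1 hy2 => /andP[hy0a hy0b] /andP[hy1a hy1b] /andP[hy2a hy2b].
have sy : y0 + y1 + y2 = 0 by rewrite /y0 /y1 /y2; field.
clear ha1 ha2 hb1 hb2 hc1 hc2.
have k3z : k3 = 0 by rewrite hk3 eg3; apply: max0_le; lra.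
have k0p : 0 <= k0 by rewrite hk0; exact: max0_ge.
have k1p : 0 <= k1 by rewrite hk1; exact: max0_ge.
have k2p : 0 <= k2 by rewrite hk2; exact: max0_ge.
have [e0a e0b] := ey_bound e y0 r e0 e1 r0 hy0a hy0b.
have [e1a e1b] := ey_bound e y1 r e0 e1 r0 hy1a hy1b.
have [e2a e2b] := ey_bound e y2 r e0 e1 r0 hy2a hy2b.
have k0b : k0 <= 4 * r by rewrite hk0; apply: max0_ub; lra.
have k1b : k1 <= 4 * r by rewrite hk1; apply: max0_ub; lra.
have k2b : k2 <= 4 * r by rewrite hk2; apply: max0_ub; lra.
have y2e : y2 = - y0 - y1 by lra.
have sd : - y0 + e * y1 = - (- y1 + e * y2) - (e * y0 - y2) by rewrite y2e; ring.
have kg0 : k0 * g0 = k0 ^+ 2 by rewrite hk0 max0_mul.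
have kg1 : k1 * g1 = k1 ^+ 2 by rewrite hk1 max0_mul.
have kg2 : k2 * g2 = k2 ^+ 2 by rewrite hk2 max0_mul.
have onez : k0 = 0 \/ k1 = 0 \/ k2 = 0.
  case: (lerP (- y1 + e * y2) 0) => h0.
    by left; rewrite hk0; apply: max0_le; lra.
  case: (lerP (e * y0 - y2) 0) => h1.
    by right; left; rewrite hk1; apply: max0_le; lra.
  right; right; rewrite hk2; apply: max0_le; lra.
have r1 : r <= 1 / 400 by rewrite /r; lra.
set S := k0 ^+ 2 + k1 ^+ 2 + k2 ^+ 2.
have q0 := sqr_ge0 k0; have q1 := sqr_ge0 k1; have q2 := sqr_ge0 k2.
have Spos : 0 < S.
  case: (ltrP 0 S) => // hS; exfalso.
  have z0 : k0 = 0 by apply/eqP; rewrite -sqrf_eq0; apply/eqP; rewrite /S in hS; lra.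
  have z1 : k1 = 0 by apply/eqP; rewrite -sqrf_eq0; apply/eqP; rewrite /S in hS; lra.
  have z2 : k2 = 0 by apply/eqP; rewrite -sqrf_eq0; apply/eqP; rewrite /S in hS; lra.
  have d0l : - y1 + e * y2 <= dl by have := max0_pos _ (esym (etrans (esym z0) hk0)); lra.
  have d1l : e * y0 - y2 <= dl by have := max0_pos _ (esym (etrans (esym z1) hk1)); lra.
  have d2l : - y0 + e * y1 <= dl by have := max0_pos _ (esym (etrans (esym z2) hk2)); lra.
  move: d0l d1l d2l; rewrite /dl y2e => d0l d1l d2l.
  have [yz0 yz1] : y0 = 0 /\ y1 = 0.
    have b0 := sq_bd hy0a hy0b; have b1 := sq_bd hy1a hy1b; have b2 := sq_bd hy2a hy2b.
    rewrite y2e in b2.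
    by apply: (@no_eq e y0 y1 r).
  apply: hne; split.
    by move: yz0 yz1; rewrite /y0 /y1 => h0 h1; lra.
  by move: yz0 yz1; rewrite /y0 /y1 => h0 h1; lra.
set K := k0 + k1 + k2.
have Kg : 0 <= K by rewrite /K; lra.
have Kb : K <= 12 * r by rewrite /K; lra.
rewrite k3z kg0 kg1 kg2.
pose Q := (k0 - a * K) ^+ 2 + (k1 - b * K) ^+ 2 + (k2 - c * K) ^+ 2
  - ((k0 - a * K) + (k1 - b * K) + (k2 - c * K)) ^+ 2 / 3.
set Y := y0 ^+ 2 + y1 ^+ 2 + y2 ^+ 2.
have b0 := sq_bd hy0a hy0b; have b1 := sq_bd hy1a hy1b; have b2 := sq_bd hy2a hy2b.
have Y0 : 0 <= Y by rewrite /Y; have := sqr_ge0 y0; have := sqr_ge0 y1; have := sqr_ge0 y2; lra.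
have Y1 : Y <= 12 * r ^+ 2 by rewrite /Y; lra.
have QY : S / 6 - 2 * S * Y <= Q.
  have eQ : Q = ((k0 - K / 3) - K * y0) ^+ 2 + ((k1 - K / 3) - K * y1) ^+ 2
     + ((k2 - K / 3) - K * y2) ^+ 2 by rewrite /Q /y0 /y1 /y2 /K; field.
  have l0 := sq_lb (k0 - K / 3) (K * y0).
  have l1 := sq_lb (k1 - K / 3) (K * y1).
  have l2 := sq_lb (k2 - K / 3) (K * y2).
  have us : (k0 - K / 3) ^+ 2 + (k1 - K / 3) ^+ 2 + (k2 - K / 3) ^+ 2 = S - K ^+ 2 / 3
    by rewrite /S /K; field.
  have K2 : K ^+ 2 <= 2 * S by apply: K2lem.
  have KY : K ^+ 2 * Y <= 2 * S * Y by apply: ler_wpM2r.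
  have eKY : (K * y0) ^+ 2 + (K * y1) ^+ 2 + (K * y2) ^+ 2 = K ^+ 2 * Y by rewrite /Y; ring.
  rewrite eQ; lra.
have F := @fin e r S K Q Y hr r0 r1 Spos Kg Kb QY Y0 Y1.
apply: (lt_le_trans F); rewrite le_eqVlt; apply/orP; left; apply/eqP.
rewrite /Q /K /S; ring.
Qed.
End Key.

Section A.
Variable R : realType.

Lemma is_derive_lim (V : normedModType R) (f : R -> V) (t : R) (df : V) :
  (fun h : R => h^-1 *: ((f \o shift t) (h *: (1:R)) - f t)) @ 0^' --> df ->
  is_derive t 1 f df.
Proof.
move=> H; split; first exact: cvgP H.
by rewrite /derive; apply: cvg_lim.
Qed.

Lemma is_derive_cvg (V : normedModType R) (f : R -> V) (t : R) (df : V) :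
  is_derive t 1 f df ->
  (fun h : R => h^-1 *: ((f \o shift t) (h *: (1:R)) - f t)) @ 0^' --> df.
Proof.
move=> [H <-]. exact: H.
Qed.

Lemma is_derive_coord (x : R -> 'rV[R]_4) (t : R) (xd : 'rV[R]_4) (j : 'I_4) :
  is_derive t 1 x xd -> is_derive t 1 (fun s => x s 0 j) (xd 0 j).
Proof.
move=> /is_derive_cvg H; apply: is_derive_lim.
have := cvg_comp _ _ H (@coord_continuous R 1 4 0 j (xd)).
apply: cvg_trans; apply: near_eq_cvg; near=> h => /=.
by rewrite !mxE.
Unshelve. all: by end_near.
Qed.

Lemma maxsq_id (a b : R) : 0 <= a * b ->
  Num.max 0 a ^+ 2 - Num.max 0 b ^+ 2 = (a - b) * (Num.max 0 a + Num.max 0 b).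
Proof.
move=> hab.
rewrite /Num.max; case: (ltrP 0 a) => ha; case: (ltrP 0 b) => hb.
- ring.
- have -> : b = 0 by nra.
  ring.
- have -> : a = 0 by nra.
  ring.
- ring.
Qed.

Lemma cont_shift (g : R -> R) (t : R) : {for t, continuous g} ->
  g (u + t) @[u --> 0^'] --> g t.
Proof.
move=> cg.
apply: cvg_comp; last exact: cg.
rewrite -[in nbhs t](add0r t).
apply: cvgD; last exact: cvg_cst.
exact: nbhs_dnbhs.
Qed.

Lemma is_derive_maxsq (g : R -> R) (t dg : R) : is_derive t 1 g dg ->
  is_derive t 1 (fun s => Num.max 0 (g s) ^+ 2) (2 * Num.max 0 (g t) * dg).
Proof.
move=> Hd.
have cg : {for t, continuous g}.
  apply: differentiable_continuous; apply/derivable1_diffP; exact: ex_derive.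
have Cg := @cont_shift g t cg.
have Cm : Num.max 0 (g (u + t)) @[u --> 0^'] --> Num.max 0 (g t).
  apply: (cvg_comp _ _ Cg).
  have := @continuous_max R R (cst 0) id (g t) (cvg_cst _) cvg_id.
  move=> H; exact: H.
have Q := @is_derive_cvg _ g t dg Hd.
apply: is_derive_lim.
have near1 : \forall u \near 0^', 0 <= g (u + t) * g t.
  have [g0|g0] := eqVneq (g t) 0.
    by near=> u; rewrite g0 mulr0.
  have L : g (u + t) * g t @[u --> 0^'] --> g t * g t.
    by apply: cvgM => //; exact: cvg_cst.
  have : 0 < g t * g t by rewrite -expr2 exprn_even_gt0 //.
  move=> /(cvgr_gt _ L) => H.
  by near do apply/ltW; exact: H.
have L2 : (fun h : R => h^-1 *: ((g \o shift t) (h *: (1:R)) - g t)) \*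
  (fun u => Num.max 0 (g (u + t)) + Num.max 0 (g t)) @ 0^' -->
  dg * (Num.max 0 (g t) + Num.max 0 (g t)).
  apply: cvgM; first exact: Q.
  by apply: cvgD => //; exact: cvg_cst.
have -> : 2 * Num.max 0 (g t) * dg = dg * (Num.max 0 (g t) + Num.max 0 (g t)) by ring.
apply: cvg_trans L2; apply: near_eq_cvg.
near=> u => /=.
have hu : 0 <= g (u + t) * g t by near: u; exact: near1.
rewrite [u *: 1]mulr1 maxsq_id //.
rewrite /GRing.scale /=.
ring.
Unshelve. all: by end_near.
Qed.

Lemma is_derive_sumR n (h : 'I_n -> R -> R) (t : R) (dh : 'I_n -> R) :
  (forall i, is_derive t 1 (h i) (dh i)) ->
  is_derive t 1 (fun s => \sum_(i < n) h i s) (\sum_(i < n) dh i).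
Proof. by move=> H; have := is_derive_sum H; rewrite fct_sumE. Qed.

Lemma is_deriveMR (f g : R -> R) (t df dg : R) :
  is_derive t 1 f df -> is_derive t 1 g dg ->
  is_derive t 1 (fun s => f s * g s) (f t * dg + g t * df).
Proof. by move=> Hf Hg; have := is_deriveM Hf Hg. Qed.

Lemma is_deriveZR (f : R -> R) (k t df : R) :
  is_derive t 1 f df -> is_derive t 1 (fun s => k * f s) (k * df).
Proof. by move=> Hf; have := is_deriveZ k Hf. Qed.

Lemma is_deriveBR (f g : R -> R) (t df dg : R) :
  is_derive t 1 f df -> is_derive t 1 g dg ->
  is_derive t 1 (fun s => f s - g s) (df - dg).
Proof. by move=> Hf Hg; have := is_deriveB Hf Hg. Qed.

Definition avgd (U : 'M[R]_4) (x xd : 'rV[R]_4) : R :=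
  \sum_(i < 4) (x 0 i * payoff U xd i + payoff U x i * xd 0 i).

Definition V0d (eps : R) (x xd : 'rV[R]_4) : R :=
  2^-1 * \sum_(i < 4) (2 * excess (U0 eps) x i * (payoff (U0 eps) xd i - avgd (U0 eps) x xd)).

Lemma is_derive_V0 (eps : R) (x : R -> 'rV[R]_4) (t : R) (xd : 'rV[R]_4) :
  is_derive t 1 x xd -> is_derive t 1 (V0 eps \o x) (V0d eps (x t) xd).
Proof.
move=> Hx.
set U := U0 eps.
have Hc j : is_derive t 1 (fun s => x s 0 j) (xd 0 j) by exact: is_derive_coord.
have Hp i : is_derive t 1 (fun s => payoff U (x s) i) (payoff U xd i).
  rewrite /payoff; apply: is_derive_sumR => j; exact: is_deriveZR.
have Ha : is_derive t 1 (fun s => avg_payoff U (x s)) (avgd U (x t) xd).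
  rewrite /avg_payoff /avgd; apply: is_derive_sumR => j; exact: is_deriveMR.
rewrite /V0d /V0 /comp.
apply: is_deriveZR; apply: is_derive_sumR => i.
rewrite /excess; apply: is_derive_maxsq; exact: is_deriveBR.
Qed.
End A.

Section C.
Variable R : realType.
Definition i0 : 'I_4 := @Ordinal 4 0 isT.
Definition i1 : 'I_4 := @Ordinal 4 1 isT.
Definition i2 : 'I_4 := @Ordinal 4 2 isT.
Definition i3 : 'I_4 := @Ordinal 4 3 isT.

Lemma sum4 (f : 'I_4 -> R) : \sum_(i < 4) f i = f i0 + f i1 + f i2 + f i3.
Proof.
rewrite !big_ord_recr big_ord0 /= add0r.
by congr (_ + _ + _ + _); congr f; apply: val_inj.
Qed.

Lemma ord4 (j : 'I_4) : j = i0 \/ j = i1 \/ j = i2 \/ j = i3.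
Proof.
case: j => [[|[|[|[|m]]]] hj].
- by left; apply: val_inj.
- by right; left; apply: val_inj.
- by right; right; left; apply: val_inj.
- by right; right; right; apply: val_inj.
- by [].
Qed.

Lemma payoffE0 (e : R) v : payoff (U0 e) v i0 = - v 0 i1 + e * v 0 i2.
Proof. by rewrite /payoff sum4 !mxE /=; ring. Qed.
Lemma payoffE1 (e : R) v : payoff (U0 e) v i1 = e * v 0 i0 - v 0 i2.
Proof. by rewrite /payoff sum4 !mxE /=; ring. Qed.
Lemma payoffE2 (e : R) v : payoff (U0 e) v i2 = - v 0 i0 + e * v 0 i1.
Proof. by rewrite /payoff sum4 !mxE /=; ring. Qed.
Lemma payoffE3 (e : R) v : payoff (U0 e) v i3 = (-1 + e) / 3 * (v 0 i0 + v 0 i1 + v 0 i2).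
Proof. by rewrite /payoff sum4 !mxE /=; ring. Qed.

Lemma avgE (e : R) v : avg_payoff (U0 e) v =
  v 0 i0 * (- v 0 i1 + e * v 0 i2) + v 0 i1 * (e * v 0 i0 - v 0 i2)
  + v 0 i2 * (- v 0 i0 + e * v 0 i1) + v 0 i3 * ((-1 + e) / 3 * (v 0 i0 + v 0 i1 + v 0 i2)).
Proof. by rewrite /avg_payoff sum4 payoffE0 payoffE1 payoffE2 payoffE3. Qed.

Lemma main_pos (e : R) (x : 'rV[R]_4) (m : R) : 0 < e -> e < 1 ->
  \sum_(i < 4) x 0 i = 1 ->
  `|x 0 i0 - m| < (1 - e) / 400 -> `|x 0 i1 - m| < (1 - e) / 400 ->
  `|x 0 i2 - m| < (1 - e) / 400 ->
  ~ (x 0 i0 = x 0 i1 /\ x 0 i1 = x 0 i2) ->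
  0 < @V0d R e x (bnn (U0 e) x).
Proof.
move=> e0 e1 hs ha hb hc hne.
rewrite sum4 in hs.
have := @key R e (x 0 i0) (x 0 i1) (x 0 i2) (x 0 i3) m
  (excess (U0 e) x i0) (excess (U0 e) x i1) (excess (U0 e) x i2) (excess (U0 e) x i3)
  (payoff (U0 e) x i0 - avg_payoff (U0 e) x) (payoff (U0 e) x i1 - avg_payoff (U0 e) x)
  (payoff (U0 e) x i2 - avg_payoff (U0 e) x) (payoff (U0 e) x i3 - avg_payoff (U0 e) x)
  e0 e1 hs ha hb hc hne
  ltac:(by rewrite avgE payoffE0) ltac:(by rewrite avgE payoffE1)
  ltac:(by rewrite avgE payoffE2) ltac:(by rewrite avgE payoffE3)
  erefl erefl erefl erefl.
set k0 := excess (U0 e) x i0.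
set k1 := excess (U0 e) x i1.
set k2 := excess (U0 e) x i2.
set k3 := excess (U0 e) x i3.
move=> H; apply: (lt_le_trans H); rewrite le_eqVlt; apply/orP; left; apply/eqP.
rewrite /V0d /avgd !sum4 !payoffE0 !payoffE1 !payoffE2 !payoffE3 !mxE !sum4 -/k0 -/k1 -/k2 -/k3.
have hd : x 0 i3 = 1 - x 0 i0 - x 0 i1 - x 0 i2 by lra.
by rewrite avgE hd; field.
Qed.
End C.

Theorem lemma3 (R : realType) (eps : R) (heps : 0 < eps < 1) :
  exists Neq : set 'rV[R]_4,
    (exists O : set 'rV[R]_4, open O /\ Neq = O `&` @simplex4 R) /\
    @E0 R `<=` Neq /\
    forall (I : set R) (x : R -> 'rV[R]_4),
      open I ->
      (forall t, I t -> @simplex4 R (x t) /\ is_derive t 1 x (bnn (U0 eps) (x t))) ->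
      forall t, I t -> Neq (x t) -> ~ @E0 R (x t) ->
        exists d : R, is_derive t 1 (V0 eps \o x) d /\ 0 < d.
Proof.
move: heps => /andP[e0 e1].
set r := (1 - eps) / 400.
have r0 : 0 < r by rewrite /r; lra.
pose O := \bigcup_(z in @E0 R) ball z r.
have E0entries : forall z, @E0 R z -> exists lam, 0 <= lam <= 1 /\
    z 0 i0 = lam / 3 /\ z 0 i1 = lam / 3 /\ z 0 i2 = lam / 3 /\ z 0 i3 = 1 - lam.
  move=> z [lam hlam <-]; exists lam; split; first by move: hlam; rewrite /= in_itv.
  by rewrite !mxE /=; split; [|split; [|split]]; ring.
exists (O `&` @simplex4 R); split; first exists O; split => //.
  by apply: bigcup_open => z _; exact: ball_open.

  move=> z Ez; split; first by exists z; [exact: Ez | exact: ballxx].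
  have [lam [/andP[l0 l1] [z0 [z1 [z2 z3]]]]] := E0entries z Ez.
  split.
    by move=> i; case: (ord4 i) => [->|[->|[->|->]]]; rewrite ?z0 ?z1 ?z2 ?z3; lra.
  by rewrite sum4 z0 z1 z2 z3; lra.
move=> I x oI hx t It [[z Ez bz] [xpos xsum]] nE.
have [_ hd] := hx t It.
exists (@V0d R eps (x t) (bnn (U0 eps) (x t))); split.
  exact: is_derive_V0.
have [lam [/andP[l0 l1] [z0 [z1 [z2 z3]]]]] := E0entries z Ez.
case: bz => _ bz.
have bd j : `|x t 0 j - z 0 j| < r.
  have := bz 0 j; rewrite /ball /= => h; by rewrite distrC.
apply: (@main_pos R eps (x t) (lam / 3) e0 e1 xsum).
- by rewrite -z0; exact: bd.
- by rewrite -z1; exact: bd.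
- by rewrite -z2; exact: bd.
move=> [h01 h12]; apply: nE.
exists (x t 0 i0 + x t 0 i1 + x t 0 i2).
  rewrite /= in_itv /=; apply/andP; split.
    by have := xpos i0; have := xpos i1; have := xpos i2; lra.
  by have := xpos i3; move: xsum; rewrite sum4; lra.
apply/rowP => j; rewrite !mxE.
move: xsum; rewrite sum4 => xsum.
by case: (ord4 j) => [->|[->|[->|->]]] /=; lra.
Qed.
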